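(* Let $F$ be a field of characteristic two and let $(A,\sigma)$ be a totally decomposable central simple $F$-algebra with orthogonal involution. If $x\in\mathrm{Sym}(A,\sigma)^+$, then $x^2\in Q(\mathfrak{Pf}(A,\sigma))$.
   Context: Involutions are of the first kind. $(A,\sigma)$ is totally decomposable if $(A,\sigma)\simeq\bigotimes_{i=1}^n(Q_i,\sigma_i)$ with quaternion $F$-algebras with involution. $\mathrm{Sym}(A,\sigma)^+=\{x\in A\mid\sigma(x)=x,\ x^2\in F\}$. The Pfister invariant $\mathfrak{Pf}(A,\sigma)$ is the bilinear Pfister form $\langle\!\langle\alpha_1,\dots,\alpha_n\rangle\!\rangle=\langle1,\alpha_1\rangle\otimes\cdots\otimes\langle1,\alpha_n\rangle$ where $\alpha_i\in F^\times$ represents $\mathrm{disc}\,\sigma_i\in F^\times/F^{\times2}$ (independent of the decomposition up to isometry). For a symmetric bilinear form $\mathfrak b$ on $V$, $Q(\mathfrak b)=\{\mathfrak b(v,v)\mid 0\ne v\in V\}\cup\{0\}$. *)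

(* Defs.v *)
From HB Require Import structures.
From mathcomp Require Import all_boot all_order all_algebra all_field.
Set Implicit Arguments. Unset Strict Implicit. Unset Printing Implicit Defensive.
Import GRing.Theory.
Local Open Scope ring_scope.

Section Defs.
Variables (F : fieldType) (A : falgType F).

Definition central_simple : Prop :=
  (forall z : A, (forall y : A, z * y = y * z) -> exists c : F, z = c%:A) /\
  (forall I : {vspace A},
     (forall a x : A, x \in I -> (a * x \in I) && (x * a \in I)) ->
     I = 0%VS \/ I = fullv).

Definition involution_first_kind (s : A -> A) : Prop :=
  (forall (k : F) (x y : A), s (k *: x + y) = k *: s x + s y) /\
  (forall x y : A, s (x * y) = s y * s x) /\
  (forall x : A, s (s x) = x).

(* char 2 (KMRT Prop. 2.6): sigma is symplectic iff 1 \in Symd(A,sigma);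
   orthogonal = not symplectic *)
Definition orthogonal_inv (s : A -> A) : Prop :=
  ~ (exists y : A, y + s y = 1).

Definition SymPlus (s : A -> A) (x : A) : Prop :=
  s x = x /\ exists c : F, x * x = c%:A.

Definition qbasis (u v : A) (k : 'I_4) : A :=
  match val k with 0 => 1 | 1 => u | 2 => v | _ => u * v end.

Definition qspan (u v : A) : {vspace A} := span [:: 1; u; v; u * v].

(* u, v generate a quaternion algebra [a, b)_F (char 2 presentation) *)
Definition quat_gens (u v : A) : Prop :=
  exists a b : F, b != 0 /\ u * u + u = a%:A /\ v * v = b%:A /\
                  v * u = (u + 1) * v.

(* (A,sigma) = (x)_i (Q_i, sigma|Q_i) with Q_i = span(1,u_i,v_i,u_i v_i):
   the Q_i are sigma-stable quaternion subalgebras, pairwise commuting, and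
   the products of their basis elements form a basis of A, i.e.
   multiplication Q_1 (x) ... (x) Q_n -> A is an isomorphism. *)
Definition tot_decomp (n : nat) (s : A -> A) (u v : 'I_n -> A) : Prop :=
  (forall i, quat_gens (u i) (v i)) /\
  (forall i, s (u i) \in qspan (u i) (v i) /\ s (v i) \in qspan (u i) (v i)) /\
  (forall i j, i != j -> forall x y, x \in qspan (u i) (v i) ->
       y \in qspan (u j) (v j) -> x * y = y * x) /\
  basis_of fullv [seq \prod_(i < n) qbasis (u i) (v i) (f i)
                 | f : {ffun 'I_n -> 'I_4}].

(* reduced norm of a non-scalar element a of a quaternion algebra:
   the constant term of its (reduced) characteristic polynomial
   X^2 - t X + nrd *)
Definition quat_nrd (a : A) (nrd : F) : Prop :=
  exists t : F, a * a - t *: a + nrd%:A = 0.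

(* alpha in F^x represents disc(sigma|Q) in F^x/F^x2, where
   disc = Nrd(a) for a nonzero (hence invertible) a in Alt(Q,sigma) *)
Definition represents_disc (s : A -> A) (u v : A) (alpha : F) : Prop :=
  exists y : A, y \in qspan u v /\ y + s y != 0 /\
    exists nrd c : F, quat_nrd (y + s y) nrd /\ c != 0 /\ nrd = alpha * c ^+ 2.

End Defs.

Section Pfister.
Variable (F : fieldType).

(* <<alpha_1,...,alpha_n>> = (x)_i <1, alpha_i>: the diagonal bilinear form
   on F^{subsets of 'I_n} with entries prod_{i in S} alpha_i *)
Definition pfister (n : nat) (alpha : 'I_n -> F)
    (x y : {ffun {set 'I_n} -> F}) : F :=
  \sum_(S : {set 'I_n}) (\prod_(i in S) alpha i) * x S * y S.

Definition Qvals (V : zmodType) (b : V -> V -> F) (c : F) : Prop :=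
  c = 0 \/ exists w : V, w != 0 /\ b w w = c.

End Pfister.

(* Main.v *)
Require Import Defs.
From HB Require Import structures.
From mathcomp Require Import all_boot all_order all_algebra all_field.
From mathcomp Require Import ring.
Import GRing.Theory.
Local Open Scope ring_scope.
Set Implicit Arguments. Unset Strict Implicit. Unset Printing Implicit Defensive.

Section Q.
Variables (F : fieldType) (A : falgType F).
Hypothesis two0 : (2%:R : F) = 0.
Lemma twoE (k : nat) : ((k.*2)%:R : F) = 0.
Proof. by rewrite -muln2 natrM two0 mulr0. Qed.
Lemma tw2 : (2%:R : F) = 0. Proof. exact: two0. Qed.
Lemma twm2 : (- 2%:R : F) = 0. Proof. by rewrite two0 oppr0. Qed.
Lemma tw4 : (4%:R : F) = 0. Proof. exact: (twoE 2). Qed.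
Lemma twm4 : (- 4%:R : F) = 0. Proof. by rewrite (twoE 2) oppr0. Qed.
Lemma tw6 : (6%:R : F) = 0. Proof. exact: (twoE 3). Qed.
Lemma twm6 : (- 6%:R : F) = 0. Proof. by rewrite (twoE 3) oppr0. Qed.
Lemma tw8 : (8%:R : F) = 0. Proof. exact: (twoE 4). Qed.
Lemma twm8 : (- 8%:R : F) = 0. Proof. by rewrite (twoE 4) oppr0. Qed.
Lemma tw10 : (10%:R : F) = 0. Proof. exact: (twoE 5). Qed.
Lemma twm10 : (- 10%:R : F) = 0. Proof. by rewrite (twoE 5) oppr0. Qed.
Lemma tw12 : (12%:R : F) = 0. Proof. exact: (twoE 6). Qed.
Lemma twm12 : (- 12%:R : F) = 0. Proof. by rewrite (twoE 6) oppr0. Qed.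
Lemma tw16 : (16%:R : F) = 0. Proof. exact: (twoE 8). Qed.
Lemma twm16 : (- 16%:R : F) = 0. Proof. by rewrite (twoE 8) oppr0. Qed.
Ltac c2 := apply/eqP; rewrite -subr_eq0; apply/eqP;
  ring: tw2 twm2 tw4 twm4 tw6 twm6 tw8 twm8 tw10 twm10 tw12 twm12 tw16 twm16.
Variables (u v : A) (a b : F).
Hypotheses (hb : b != 0) (hu : u * u + u = a%:A) (hv : v * v = b%:A)
  (hvu : v * u = (u + 1) * v).
Definition qv (p0 p1 p2 p3 : F) : A := p0%:A + p1 *: u + p2 *: v + p3 *: (u * v).
Lemma qvD (p0 p1 p2 p3 q0 q1 q2 q3 : F) :
  qv p0 p1 p2 p3 + qv q0 q1 q2 q3 = qv (p0+q0) (p1+q1) (p2+q2) (p3+q3).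
Proof.
rewrite /qv !scalerDl.
rewrite addrACA; congr (_ + _). rewrite addrACA; congr (_ + _). by rewrite addrACA.
Qed.
Lemma qvZ (k p0 p1 p2 p3 : F) : k *: qv p0 p1 p2 p3 = qv (k * p0) (k * p1) (k * p2) (k * p3).
Proof. by rewrite /qv !scalerDr !scalerA. Qed.
Lemma qvN (p0 p1 p2 p3 : F) : - qv p0 p1 p2 p3 = qv (-p0) (-p1) (-p2) (-p3).
Proof. by rewrite -scaleN1r qvZ !mulN1r. Qed.
Lemma qv_eq (p0 p1 p2 p3 q0 q1 q2 q3 : F) : p0 = q0 -> p1 = q1 -> p2 = q2 -> p3 = q3 ->
  qv p0 p1 p2 p3 = qv q0 q1 q2 q3.
Proof. by move=> -> -> -> ->. Qed.
Lemma qv1 : qv 1 0 0 0 = 1.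
Proof. by rewrite /qv !scale0r !addr0 scale1r. Qed.
Lemma qvu : qv 0 1 0 0 = u.
Proof. by rewrite /qv !scale0r !addr0 add0r scale1r. Qed.
Lemma qvv : qv 0 0 1 0 = v.
Proof. by rewrite /qv !scale0r !addr0 add0r scale1r. Qed.
Lemma qvuv : qv 0 0 0 1 = u * v.
Proof. by rewrite /qv !scale0r !add0r scale1r. Qed.
Lemma qvC (k : F) : qv k 0 0 0 = k%:A.
Proof. by rewrite /qv !scale0r !addr0. Qed.

Lemma uu : u * u = a%:A - u.
Proof. by rewrite -hu addrK. Qed.

Lemma Lu (q0 q1 q2 q3 : F) :
  u * qv q0 q1 q2 q3 = qv (a * q1) (q0 - q1) (a * q3) (q2 - q3).
Proof.
have e1 : u * q0%:A = qv 0 q0 0 0 by rewrite mulr_algr -qvu qvZ; apply: qv_eq; ring.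
have e2 : u * (q1 *: u) = qv (a * q1) (- q1) 0 0.
  by rewrite -scalerAr uu -qvC -qvu qvN qvD qvZ; apply: qv_eq; ring.
have e3 : u * (q2 *: v) = qv 0 0 0 q2 by rewrite -scalerAr -qvuv qvZ; apply: qv_eq; ring.
have e4 : u * (q3 *: (u * v)) = qv 0 0 (a * q3) (- q3).
  rewrite -scalerAr mulrA uu mulrBl mulr_algl -qvuv -qvv qvZ qvN qvD qvZ; apply: qv_eq; ring.
rewrite /qv !mulrDr -/(qv _ _ _ _) e1 e2 e3 e4 !qvD; apply: qv_eq; ring.
Qed.
Lemma Lv (q0 q1 q2 q3 : F) :
  v * qv q0 q1 q2 q3 = qv (b * q2 + b * q3) (b * q3) (q0 + q1) q1.
Proof.
have e1 : v * q0%:A = qv 0 0 q0 0 by rewrite mulr_algr -qvv qvZ; apply: qv_eq; ring.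
have e2 : v * (q1 *: u) = qv 0 0 q1 q1.
  by rewrite -scalerAr hvu mulrDl mul1r -qvuv -qvv qvD qvZ; apply: qv_eq; ring.
have e3 : v * (q2 *: v) = qv (b * q2) 0 0 0 by rewrite -scalerAr hv -qvC qvZ; apply: qv_eq; ring.
have e4 : v * (q3 *: (u * v)) = qv (b * q3) (b * q3) 0 0.
  rewrite -scalerAr mulrA hvu -mulrA hv mulr_algr -qvu -qv1 qvD !qvZ.
  apply: qv_eq; ring.
rewrite /qv !mulrDr -/(qv _ _ _ _) e1 e2 e3 e4 !qvD; apply: qv_eq; ring.
Qed.

Lemma qvM (p0 p1 p2 p3 q0 q1 q2 q3 : F) :
  qv p0 p1 p2 p3 * qv q0 q1 q2 q3 =
  qv (p0 * q0 + a * p1 * q1 + b * p2 * q2 + b * p2 * q3 + a * b * p3 * q3)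
     (p0 * q1 + p1 * q0 - p1 * q1 + b * p2 * q3 + b * p3 * q2)
     (p0 * q2 + a * p1 * q3 + p2 * q0 + p2 * q1 + a * p3 * q1)
     (p0 * q3 + p1 * q2 - p1 * q3 + p2 * q1 + p3 * q0).
Proof.
rewrite {1}/qv !mulrDl mulr_algl -!scalerAl -[u * v * _]mulrA !Lv !Lu !qvZ !qvD; apply: qv_eq; ring.
Qed.

Lemma scal_eq0 (k : F) : k%:A = 0 :> A -> k = 0.
Proof. by move/eqP; rewrite scaler_eq0 oner_eq0 orbF => /eqP. Qed.

Lemma inj2 (k0 k1 : F) : qv k0 k1 0 0 = 0 -> k0 = 0 /\ k1 = 0.
Proof.
move=> h.
have h1 : v * qv k0 k1 0 0 + qv k0 k1 0 0 * v = qv 0 0 k1 0.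
  by rewrite -qvv !qvM qvD; apply: qv_eq; ring: two0.
rewrite h mulr0 mul0r addr0 in h1.
have : qv 0 0 k1 0 * v = (k1 * b)%:A by rewrite -qvv qvM -qvC; apply: qv_eq; ring.
rewrite -h1 mul0r => /esym/scal_eq0/eqP; rewrite mulf_eq0 (negbTE hb) orbF => /eqP k10.
by subst; rewrite qvC in h; split => //; apply: scal_eq0.
Qed.

Lemma qv0P (p0 p1 p2 p3 : F) : qv p0 p1 p2 p3 = 0 -> [/\ p0 = 0, p1 = 0, p2 = 0 & p3 = 0].
Proof.
move=> h.
have h1 : u * qv p0 p1 p2 p3 + qv p0 p1 p2 p3 * u = qv 0 0 p2 p3.
  by rewrite -qvu !qvM qvD; apply: qv_eq; c2.
rewrite h mulr0 mul0r addr0 in h1.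
have : qv 0 0 p2 p3 * v = qv (b * p2) (b * p3) 0 0 by rewrite -qvv qvM; apply: qv_eq; ring.
rewrite -h1 mul0r => /esym/inj2 [/eqP h2 /eqP h3].
move: h2 h3; rewrite !mulf_eq0 (negbTE hb) /= => /eqP e2 /eqP e3; subst.
by have [e0 e1] := inj2 h; subst.
Qed.

Lemma qv_inj (p0 p1 p2 p3 q0 q1 q2 q3 : F) : qv p0 p1 p2 p3 = qv q0 q1 q2 q3 ->
  [/\ p0 = q0, p1 = q1, p2 = q2 & p3 = q3].
Proof.
move=> /eqP; rewrite -subr_eq0 qvN qvD => /eqP /qv0P [] /eqP h0 /eqP h1 /eqP h2 /eqP h3.
by move: h0 h1 h2 h3; rewrite !subr_eq0 => /eqP -> /eqP -> /eqP -> /eqP ->.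
Qed.
Lemma qv_sq (p0 p1 p2 p3 : F) : qv p0 p1 p2 p3 * qv p0 p1 p2 p3 =
  p1 *: qv p0 p1 p2 p3 +
  (p0 * p0 + a * p1 * p1 + b * p2 * p2 + b * p2 * p3 + a * b * p3 * p3 + p1 * p0)%:A.
Proof. by rewrite qvM qvZ -qvC qvD; apply: qv_eq; c2. Qed.

Variables (s : A -> A).
Hypotheses (hsl : forall (k : F) (x y : A), s (k *: x + y) = k *: s x + s y)
  (hsm : forall x y : A, s (x * y) = s y * s x) (hss : forall x, s (s x) = x)
  (hort : ~ (exists y : A, y + s y = 1)).
Variables (su0 su1 su2 su3 sv0 sv1 sv2 sv3 : F).
Hypotheses (hsu : s u = qv su0 su1 su2 su3) (hsv : s v = qv sv0 sv1 sv2 sv3).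

Lemma s0 : s 0 = 0.
Proof.
have := hsl 1 0 0; rewrite !scale1r addr0 => /(congr1 (fun w => w - s 0)).
by rewrite subrr addrK => /esym. Qed.

Lemma sD x y : s (x + y) = s x + s y.
Proof. by have := hsl 1 x y; rewrite !scale1r. Qed.
Lemma sZ k x : s (k *: x) = k *: s x.
Proof. by have := hsl k x 0; rewrite !addr0 s0 addr0. Qed.
Lemma sN x : s (- x) = - s x.
Proof. by rewrite -scaleN1r sZ scaleN1r. Qed.
Lemma s1 : s 1 = 1.
Proof. by rewrite -[s 1]mulr1 -{2}(hss 1) -hsm mulr1 hss. Qed.
Lemma sC k : s (k%:A) = k%:A.
Proof. by rewrite sZ s1. Qed.

Lemma s_qvE p0 p1 p2 p3 : s (qv p0 p1 p2 p3) =
  p0%:A + p1 *: qv su0 su1 su2 su3 + p2 *: qv sv0 sv1 sv2 sv3 +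
  p3 *: (qv sv0 sv1 sv2 sv3 * qv su0 su1 su2 su3).
Proof. by rewrite {1}/qv !sD !sZ s1 (hsm u v) hsu hsv. Qed.

Lemma s_qv p0 p1 p2 p3 : exists q0 q1 q2 q3, s (qv p0 p1 p2 p3) = qv q0 q1 q2 q3.
Proof. by rewrite s_qvE qvM -qvC !qvZ !qvD; do 4 eexists. Qed.

Lemma sT p0 p1 p2 p3 q0 q1 q2 q3 :
  s (qv p0 p1 p2 p3) = qv q0 q1 q2 q3 -> q1 = p1.
Proof.
move=> hs.
have e1 := hsm (qv p0 p1 p2 p3) (qv p0 p1 p2 p3).
rewrite qv_sq sD sZ sC hs qv_sq -!qvC !qvZ !qvD in e1.
have [_ h1 h2 h3] := qv_inj e1.
case: (eqVneq q1 p1) => // hne.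
have k0 (r : F) : p1 * r + 0 = q1 * r + 0 -> r = 0.
  move=> h; apply/eqP; move: h => /eqP; rewrite !addr0 -subr_eq0 -mulrBl mulf_eq0.
  by rewrite subr_eq0 eq_sym (negbTE hne).
move: (k0 _ h1) (k0 _ h2) (k0 _ h3) => z1 z2 z3; subst.
move: hs; rewrite qvC => /(congr1 s); rewrite hss sC -qvC => /qv_inj [_ hp _ _].
by move: hne; rewrite hp eqxx.
Qed.
Lemma opp2 (x : F) : - x = x.
Proof. by c2. Qed.

Lemma altsym p0 p1 p2 p3 m0 m1 m2 m3 r0 r1 r2 r3 :
  s (qv m0 m1 m2 m3) = qv m0 m1 m2 m3 ->
  (qv p0 p1 p2 p3 + s (qv p0 p1 p2 p3)) * qv m0 m1 m2 m3 = qv r0 r1 r2 r3 -> r1 = 0.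
Proof.
move=> hm hr; have [q0 [q1 [q2 [q3 hq]]]] := s_qv p0 p1 p2 p3.
have hw := hsm (qv m0 m1 m2 m3) (qv p0 p1 p2 p3).
rewrite hm hq !qvM in hw.
rewrite hq mulrDl !qvM qvD in hr; have [_ h1 _ _] := qv_inj hr.
by rewrite -h1 (sT hw); c2.
Qed.

Variables (g0 g1 g2 g3 : F).
Let y := qv g0 g1 g2 g3.
Hypothesis hne : y + s y != 0.
Variables (nrd t c alpha : F).
Hypotheses (hnrd : (y + s y) * (y + s y) - t *: (y + s y) + nrd%:A = 0)
  (hc : c != 0) (hal : nrd = alpha * c ^+ 2).

Lemma L_e : exists e0 e2 e3, y + s y = qv e0 0 e2 e3.
Proof.
have [h0 [h1 [h2 [h3 hh]]]] := s_qv g0 g1 g2 g3.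
rewrite /y hh qvD (sT hh); exists (g0 + h0), (g2 + h2), (g3 + h3).
by apply: qv_eq => //; c2.
Qed.

Section E.
Variables (e0 e2 e3 : F).
Hypothesis he : y + s y = qv e0 0 e2 e3.
Let e := qv e0 0 e2 e3.

Lemma se : s e = e.
Proof. by rewrite /e -he sD hss addrC. Qed.

Lemma e23 : (e2 != 0) || (e3 != 0).
Proof.
apply: contraT; rewrite negb_or !negbK => /andP [/eqP z2 /eqP z3]; subst.
have e0n : e0 != 0.
  by apply: contra hne; rewrite he => /eqP ->; rewrite qvC scale0r.
case: hort; exists (e0^-1 *: y).
by rewrite sZ -scalerDr he qvC scalerA mulVf // scale1r.
Qed.

Definition eps := e0 * e0 + b * e2 * e2 + b * e2 * e3 + a * b * e3 * e3.

Lemma ee : e * e = eps%:A.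
Proof. by rewrite /e qvM -qvC; apply: qv_eq; rewrite /eps; c2. Qed.

Lemma eps_nrd : eps = nrd.
Proof.
move: hnrd; rewrite he -/e ee -!qvC /e qvZ qvN !qvD => /qv0P [h0 _ h2 h3].
have t0 : t = 0.
  apply/eqP; apply: contraT => tn; move: e23.
  move: h2 h3; rewrite !add0r !addr0 => /eqP + /eqP.
  by rewrite !oppr_eq0 !mulf_eq0 !(negbTE tn) /= => /eqP -> /eqP ->; rewrite eqxx.

move: h0; rewrite t0 mul0r oppr0 !addr0 => /eqP; rewrite addr_eq0 => /eqP ->.
by rewrite opp2.
Qed.

Definition Tez p1 p2 p3 := e0 * p1 + b * e2 * p3 + b * e3 * p2.

Lemma sym_form p0 p1 p2 p3 : exists mu, s (qv p0 p1 p2 p3) = qv p0 p1 p2 p3 + mu *: e.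
Proof.
have [q0 [q1 [q2 [q3 hq]]]] := s_qv p0 p1 p2 p3.
have q1E := sT hq.
have ha : (qv p0 p1 p2 p3 + s (qv p0 p1 p2 p3)) * e = qv (p0 + q0) (p1 + q1) (p2 + q2) (p3 + q3) * e.
  by rewrite hq qvD.
rewrite /e qvM in ha; have := altsym se ha; rewrite q1E.
set a0 := p0 + q0; set a2 := p2 + q2; set a3 := p3 + q3 => hT.
have hd : a2 * e3 = a3 * e2.
  have hb0 : b * (a2 * e3 - a3 * e2) = 0 by rewrite -hT; c2.
  by apply/eqP; rewrite -subr_eq0; move/eqP: hb0; rewrite mulf_eq0 (negbTE hb).
have [mu [m2 m3]] : exists mu, a2 = mu * e2 /\ a3 = mu * e3.
  case: (eqVneq e2 0) => [z2 | n2].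
    have n3 : e3 != 0 by move: e23; rewrite z2 eqxx.
    exists (a3 / e3); split; last by rewrite divfK.
    by move: hd; rewrite z2 mulr0 => /eqP; rewrite mulf_eq0 (negbTE n3) orbF => /eqP ->; rewrite mulr0.
  exists (a2 / e2); split; first by rewrite divfK.
  by apply: (mulIf n2); rewrite -hd mulrAC divfK.
exists mu.
set nu := a0 - mu * e0.
have hnu : nu = 0.
  apply/eqP; apply: contraT => nn; case: hort.
  exists (nu^-1 *: (qv p0 p1 p2 p3 - mu *: y)).
  rewrite sZ -scalerDr sD sN sZ.
  have -> : forall X SX Y SY : A, X - mu *: Y + (SX - mu *: SY) = (X + SX) - mu *: (Y + SY).
    by move=> X SX Y SY; rewrite scalerDr opprD addrACA.
  rewrite he hq qvD.
  rewrite qvZ qvN qvD (_ : qv _ _ _ _ = nu%:A) ?scalerA ?mulVf ?scale1r //.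
  rewrite -qvC; apply: qv_eq; rewrite /nu -/a0 -/a2 -/a3 ?m2 ?m3 ?q1E //; c2.
move: hnu; rewrite /nu => /eqP; rewrite subr_eq0 => /eqP hnu.
rewrite hq /e qvZ qvD; apply: qv_eq.
- by rewrite -hnu /a0; c2.
- by rewrite q1E; c2.
- by rewrite -m2 /a2; c2.
- by rewrite -m3 /a3; c2.
Qed.

Lemma mu_eq p0 p1 p2 p3 mu : s (qv p0 p1 p2 p3) = qv p0 p1 p2 p3 + mu *: e ->
  mu * (Tez p1 p2 p3 + mu * eps) = 0.
Proof.
move=> hs; have h := hsm (qv p0 p1 p2 p3) (qv p0 p1 p2 p3).
rewrite qv_sq sD sZ sC hs /e qvZ qvD qv_sq -!qvC !qvZ !qvD in h.
have [h0 _ _ _] := qv_inj h.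
move: h0 => /eqP; rewrite eq_sym -subr_eq0 => /eqP h0.
by rewrite -h0 /Tez /eps; c2.
Qed.

Lemma Tez_sym p0 p1 p2 p3 : s (qv p0 p1 p2 p3) = qv p0 p1 p2 p3 -> Tez p1 p2 p3 = 0.
Proof.
move=> hs.
have hr : (y + s y) * qv p0 p1 p2 p3 =
  qv (e0 * p0 + a * 0 * p1 + b * e2 * p2 + b * e2 * p3 + a * b * e3 * p3)
     (e0 * p1 + 0 * p0 - 0 * p1 + b * e2 * p3 + b * e3 * p2)
     (e0 * p2 + a * 0 * p3 + e2 * p0 + e2 * p1 + a * e3 * p1)
     (e0 * p3 + 0 * p2 - 0 * p3 + e2 * p1 + e3 * p0) by rewrite he qvM.
by have := altsym hs hr; rewrite /Tez => <-; ring.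
Qed.

Lemma mu_char p0 p1 p2 p3 mu : s (qv p0 p1 p2 p3) = qv p0 p1 p2 p3 + mu *: e ->
  Tez p1 p2 p3 != 0 -> mu * eps = Tez p1 p2 p3.
Proof.
move=> hs hT; have := mu_eq hs.
have mun : mu != 0.
  apply: contra hT => /eqP m0; move: hs; rewrite m0 scale0r addr0 => /Tez_sym ->.
  by [].
move/eqP; rewrite mulf_eq0 (negbTE mun) /= addr_eq0 => /eqP ->; by rewrite opp2.
Qed.

Lemma eps_ne0 : eps != 0.
Proof.
have key (p0 p1 p2 p3 : F) : Tez p1 p2 p3 != 0 -> eps != 0.
  move=> hT; have [mu hs] := sym_form p0 p1 p2 p3.
  have h := mu_char hs hT; apply: contraNneq hT => ez; by rewrite -h ez mulr0.
case: (eqVneq e3 0) => [z3 | n3].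
  have n2 : e2 != 0 by move: e23; rewrite z3 eqxx orbF.
  apply: (key 0 0 0 1); rewrite /Tez (_ : _ + _ = b * e2); first by rewrite mulf_neq0.
  ring.
apply: (key 0 0 1 0); rewrite /Tez (_ : _ + _ = b * e3); first by rewrite mulf_neq0.
ring.
Qed.

Lemma sform p0 p1 p2 p3 :
  s (qv p0 p1 p2 p3) = qv p0 p1 p2 p3 + (Tez p1 p2 p3 / eps) *: e.
Proof.
have [mu hs] := sym_form p0 p1 p2 p3.
rewrite hs; congr (_ + _ *: _).
case: (eqVneq (Tez p1 p2 p3) 0) => [z | nz].
  have := mu_eq hs; rewrite z add0r mulrA => /eqP; rewrite mulf_eq0 (negbTE eps_ne0) orbF.
  by rewrite mulf_eq0 orbb => /eqP ->; rewrite mul0r.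
by rewrite -(mu_char hs nz) mulfK // eps_ne0.
Qed.

Lemma alpha_ne0 : alpha != 0.
Proof. by have := eps_ne0; rewrite eps_nrd hal; apply: contraNneq => ->; rewrite mul0r. Qed.

Lemma O2 p0 p1 p2 p3 r0 r1 r2 r3 :
  s (qv p0 p1 p2 p3) * qv p0 p1 p2 p3 = qv r0 r1 r2 r3 ->
  exists s0 t0, r1 = s0 ^+ 2 + t0 ^+ 2 * alpha.
Proof.
rewrite sform /e qvZ qvD qvM => /qv_inj [_ <- _ _].
exists p1, (Tez p1 p2 p3 / (alpha * c)).
set mu := Tez p1 p2 p3 / eps.
transitivity (p1 ^+ 2 + mu * Tez p1 p2 p3); first by rewrite /Tez; c2.
congr (_ + _); rewrite /mu eps_nrd hal; field.
by rewrite alpha_ne0 hc.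
Qed.

Lemma O3 : (forall r0 r1 r2 r3, s v * v = qv r0 r1 r2 r3 -> r1 != 0) \/
           (forall r0 r1 r2 r3, s (u * v) * (u * v) = qv r0 r1 r2 r3 -> r1 != 0).
Proof.
case: (eqVneq e3 0) => [z3 | n3]; [right | left] => r0 r1 r2 r3.
  have n2 : e2 != 0 by move: e23; rewrite z3 eqxx orbF.
  rewrite -qvuv sform /e qvZ qvD qvM => /qv_inj [_ <- _ _].
  rewrite (_ : _ + _ = (b * e2) ^+ 2 / eps); last by rewrite /Tez z3; c2.
  by rewrite mulf_neq0 ?invr_neq0 ?eps_ne0 // expf_neq0 // mulf_neq0.
rewrite -qvv sform /e qvZ qvD qvM => /qv_inj [_ <- _ _].
rewrite (_ : _ + _ = (b * e3) ^+ 2 / eps); last by rewrite /Tez; c2.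
by rewrite mulf_neq0 ?invr_neq0 ?eps_ne0 // expf_neq0 // mulf_neq0.
Qed.
End E.
End Q.

Definition o0 : 'I_4 := @Ordinal 4 0 isT.
Definition o1 : 'I_4 := @Ordinal 4 1 isT.
Definition o2 : 'I_4 := @Ordinal 4 2 isT.
Definition o3 : 'I_4 := @Ordinal 4 3 isT.

Lemma sum4 (T : zmodType) (G : 'I_4 -> T) : \sum_(i < 4) G i = G o0 + G o1 + G o2 + G o3.
Proof.
rewrite !big_ord_recl big_ord0 addr0 !addrA.
by congr (_ + _ + _ + _); congr G; apply: val_inj.
Qed.

Lemma ord4P (P : 'I_4 -> Prop) : P o0 -> P o1 -> P o2 -> P o3 -> forall k, P k.
Proof.
move=> h0 h1 h2 h3 [[|[|[|[|k]]]] hk] //.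
- by rewrite (_ : Ordinal hk = o0) //; apply: val_inj.
- by rewrite (_ : Ordinal hk = o1) //; apply: val_inj.
- by rewrite (_ : Ordinal hk = o2) //; apply: val_inj.
- by rewrite (_ : Ordinal hk = o3) //; apply: val_inj.
Qed.

Section Br.
Variables (F : fieldType) (A : falgType F).
Hypothesis two0 : (2%:R : F) = 0.
Variables (u v : A) (a b : F).
Hypotheses (hb : b != 0) (hu : u * u + u = a%:A) (hv : v * v = b%:A)
  (hvu : v * u = (u + 1) * v).

Definition X4 : 4.-tuple A := [tuple 1; u; v; u * v].
Definition CQ (k : 'I_4) (z : A) : F := coord X4 k z.

Lemma X4_nth (k : 'I_4) : X4`_k = qbasis u v k.
Proof. by case: k => [[|[|[|[|k]]]] hk]. Qed.

Lemma sumX4 (p0 p1 p2 p3 : F) :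
  \sum_(i < 4) [:: p0; p1; p2; p3]`_i *: X4`_i = qv u v p0 p1 p2 p3.
Proof. by rewrite sum4 /= /qv. Qed.

Lemma freeX4 : free X4.
Proof.
apply/freeP => k hk; have : qv u v (k o0) (k o1) (k o2) (k o3) = 0.
  by rewrite -hk sum4.
case/(qv0P two0 hb hu hv hvu) => h0 h1 h2 h3.
by apply: ord4P.
Qed.

Lemma CQ_qv (p0 p1 p2 p3 : F) (k : 'I_4) :
  CQ k (qv u v p0 p1 p2 p3) = [:: p0; p1; p2; p3]`_k.
Proof. by rewrite /CQ -sumX4 coord_sum_free // freeX4. Qed.

Lemma TQ_qv (p0 p1 p2 p3 : F) : CQ o1 (qv u v p0 p1 p2 p3) = p1.
Proof. by rewrite CQ_qv. Qed.

Lemma qspan_exp z : z \in qspan u v -> z = \sum_(k < 4) CQ k z *: qbasis u v k.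
Proof.
move=> hz; rewrite {1}(@coord_span _ _ _ X4 z hz).
by apply: eq_bigr => k _; rewrite X4_nth.
Qed.

Lemma qspanP z : z \in qspan u v -> exists p0 p1 p2 p3, z = qv u v p0 p1 p2 p3.
Proof.
move=> /qspan_exp ->; rewrite sum4 /=.
exists (CQ o0 z), (CQ o1 z), (CQ o2 z), (CQ o3 z).
by rewrite /qv.
Qed.

Lemma qv_in (p0 p1 p2 p3 : F) : qv u v p0 p1 p2 p3 \in qspan u v.
Proof.
have hm (k : F) w : w \in [:: 1; u; v; u * v] -> k *: w \in qspan u v.
  by move=> hw; apply: (memvZ (U := qspan u v)); apply: memv_span.
rewrite /qv; apply: (memvD (U := qspan u v)); last by apply: hm; rewrite !inE eqxx ?orbT.
apply: (memvD (U := qspan u v)); last by apply: hm; rewrite !inE eqxx ?orbT.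
by apply: (memvD (U := qspan u v)); apply: hm; rewrite !inE eqxx ?orbT.
Qed.

Lemma qbasis_in k : qbasis u v k \in qspan u v.
Proof. by rewrite -X4_nth; apply: memv_span; apply: mem_nth. Qed.

Lemma qspanM x y : x \in qspan u v -> y \in qspan u v -> x * y \in qspan u v.
Proof.
move=> /qspanP [p0 [p1 [p2 [p3 ->]]]] /qspanP [q0 [q1 [q2 [q3 ->]]]].
by rewrite (qvM hu hv hvu) qv_in.
Qed.

Lemma quat_iface (s : A -> A) (alpha : F) :
  (forall (k : F) (x y : A), s (k *: x + y) = k *: s x + s y) ->
  (forall x y : A, s (x * y) = s y * s x) -> (forall x, s (s x) = x) ->
  ~ (exists y : A, y + s y = 1) ->
  s u \in qspan u v -> s v \in qspan u v -> represents_disc s u v alpha ->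
  [/\ forall z, z \in qspan u v -> s z \in qspan u v,
      forall z, z \in qspan u v -> CQ o1 (s z) = CQ o1 z,
      forall z, z \in qspan u v -> exists s0 t0, CQ o1 (s z * z) = s0 ^+ 2 + t0 ^+ 2 * alpha
    & exists k, CQ o1 (s (qbasis u v k) * qbasis u v k) != 0].
Proof.
move=> hsl hsm hss hort /qspanP [su0 [su1 [su2 [su3 hsu]]]] /qspanP [sv0 [sv1 [sv2 [sv3 hsv]]]].
case=> y [/qspanP [g0 [g1 [g2 [g3 hy]]]] [hne [nrd [c [[t hnrd] [hc hal]]]]]].
subst y.
have [e0 [e2 [e3 he]]] := @L_e F A two0 u v a b hb hu hv hvu s hsl hsm hss
   su0 su1 su2 su3 sv0 sv1 sv2 sv3 hsu hsv g0 g1 g2 g3.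
have sQ z : z \in qspan u v -> exists p0 p1 p2 p3 q0 q1 q2 q3,
    z = qv u v p0 p1 p2 p3 /\ s z = qv u v q0 q1 q2 q3.
  move=> /qspanP [p0 [p1 [p2 [p3 ->]]]].
  have [q0 [q1 [q2 [q3 hq]]]] := @s_qv F A u v a b hu hv hvu s hsl hsm hss
     su0 su1 su2 su3 sv0 sv1 sv2 sv3 hsu hsv p0 p1 p2 p3.
  by exists p0, p1, p2, p3, q0, q1, q2, q3.
split.
- by move=> z /sQ [p0 [p1 [p2 [p3 [q0 [q1 [q2 [q3 [_ ->]]]]]]]]]; apply: qv_in.
- move=> z /sQ [p0 [p1 [p2 [p3 [q0 [q1 [q2 [q3 [-> hq]]]]]]]]].
  by rewrite hq !TQ_qv (@sT F A two0 u v a b hb hu hv hvu s hsl hsm hss _ _ _ _ _ _ _ _ hq).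
- move=> z /sQ [p0 [p1 [p2 [p3 [q0 [q1 [q2 [q3 [-> hq]]]]]]]]].
  move: (hq); move=> hq'; rewrite hq (qvM hu hv hvu) TQ_qv.
  have := @O2 F A two0 u v a b hb hu hv hvu s hsl hsm hss hort
     su0 su1 su2 su3 sv0 sv1 sv2 sv3 hsu hsv g0 g1 g2 g3 hne nrd t c alpha
     hnrd hc hal e0 e2 e3 he p0 p1 p2 p3.
  by rewrite hq' (qvM hu hv hvu) => /(_ _ _ _ _ erefl).
- have := @O3 F A two0 u v a b hb hu hv hvu s hsl hsm hss hort
     su0 su1 su2 su3 sv0 sv1 sv2 sv3 hsu hsv g0 g1 g2 g3 hne nrd t c alpha
     hnrd hal e0 e2 e3 he.
  case=> [H | H].
  + exists o2; rewrite /qbasis /=.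
    have [q0 [q1 [q2 [q3 hq]]]] := @s_qv F A u v a b hu hv hvu s hsl hsm hss
       su0 su1 su2 su3 sv0 sv1 sv2 sv3 hsu hsv 0 0 1 0.
    rewrite (qvv u v) in hq; rewrite hq -{2}(qvv u v) (qvM hu hv hvu) TQ_qv.
    by apply: (H _ _ _ _); rewrite hq -{2}(qvv u v) (qvM hu hv hvu).
  + exists o3; rewrite /qbasis /=.
    have [q0 [q1 [q2 [q3 hq]]]] := @s_qv F A u v a b hu hv hvu s hsl hsm hss
       su0 su1 su2 su3 sv0 sv1 sv2 sv3 hsu hsv 0 0 0 1.
    rewrite (qvuv u v) in hq; rewrite hq -(qvuv u v) (qvM hu hv hvu) TQ_qv.
    by apply: (H _ _ _ _); rewrite hq -(qvuv u v) (qvM hu hv hvu).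
Qed.
End Br.

Section Glob.
Variables (F : fieldType) (A : falgType F).
Hypothesis two0 : (2%:R : F) = 0.
Variables (n : nat) (u v : 'I_n -> A) (s : A -> A).
Hypotheses (hsD : forall x y, s (x + y) = s x + s y)
  (hsZ : forall (k : F) x, s (k *: x) = k *: s x)
  (hsm : forall x y : A, s (x * y) = s y * s x) (hss : forall x, s (s x) = x).
Local Notation Q i := (qspan (u i) (v i)).
Local Notation qb i k := (qbasis (u i) (v i) k).
Hypothesis hcomm : forall i j, i != j -> forall x y,
  x \in Q i -> y \in Q j -> x * y = y * x.
Hypothesis hsQ : forall i z, z \in Q i -> s z \in Q i.
Hypothesis hQM : forall i x y, x \in Q i -> y \in Q i -> x * y \in Q i.
Hypothesis hqb : forall i k, qb i k \in Q i.

Definition mono (f : {ffun 'I_n -> 'I_4}) : A := \prod_(i < n) qb i (f i).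

Lemma gs1 : s 1 = 1.
Proof. by rewrite -[s 1]mulr1 -{2}(hss 1) -hsm mulr1 hss. Qed.
Lemma gs0 : s 0 = 0.
Proof. by have := hsZ 0 0; rewrite !scale0r. Qed.

Lemma prodM (r : seq 'I_n) (p q : 'I_n -> A) : uniq r ->
  (forall i, p i \in Q i) -> (forall i, q i \in Q i) ->
  (\prod_(i <- r) p i) * (\prod_(i <- r) q i) = \prod_(i <- r) (p i * q i).
Proof.
move=> + hp hq; elim: r => [|h t IH] /=; first by rewrite !big_nil mulr1.
case/andP => ht ut; rewrite !big_cons -IH //.
have HC : \prod_(i <- t) p i * q h = q h * \prod_(i <- t) p i.
  symmetry; rewrite big_seq_cond; apply: commr_prod => i /andP [it _].
  apply: hcomm (hq h) (hp i).
  by apply: contraNneq ht => ->.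
by rewrite mulrA -(mulrA (p h)) HC !mulrA.
Qed.

Lemma prodS (r : seq 'I_n) (p : 'I_n -> A) : uniq r -> (forall i, p i \in Q i) ->
  s (\prod_(i <- r) p i) = \prod_(i <- r) s (p i).
Proof.
move=> + hp; elim: r => [|h t IH] /=; first by rewrite !big_nil gs1.
case/andP => ht ut; rewrite !big_cons hsm IH //.
rewrite big_seq_cond; symmetry; apply: commr_prod => i /andP [it _].
apply: hcomm (hsQ (hp h)) (hsQ (hp i)).
by apply: contraNneq ht => ->.
Qed.

Variables (CQ : 'I_n -> 'I_4 -> A -> F).
Hypothesis CQ_exp : forall i z, z \in Q i -> z = \sum_(k < 4) CQ i k z *: qb i k.
Variable lam : A -> F.
Hypotheses (lamD : forall x y, lam (x + y) = lam x + lam y)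
  (lamZ : forall (k : F) x, lam (k *: x) = k * lam x).
Variable fstar : {ffun 'I_n -> 'I_4}.
Hypothesis lam_m : forall f, lam (mono f) = (f == fstar)%:R.

Lemma lam0 : lam 0 = 0.
Proof. by have := lamZ 0 0; rewrite scale0r mul0r. Qed.

Lemma lam_sum (I : Type) (r : seq I) (G : I -> A) :
  lam (\sum_(j <- r) G j) = \sum_(j <- r) lam (G j).
Proof. exact: (big_morph lam lamD lam0). Qed.

Lemma lam_prod (z : 'I_n -> A) : (forall i, z i \in Q i) ->
  lam (\prod_(i < n) z i) = \prod_(i < n) CQ i (fstar i) (z i).
Proof.
move=> hz.
rewrite (eq_bigr (fun i => \sum_(k < 4) CQ i k (z i) *: qb i k)); last first.
  by move=> i _; rewrite -CQ_exp.
rewrite bigA_distr_bigA /= lam_sum.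
rewrite (eq_bigr (fun f : {ffun 'I_n -> 'I_4} => (\prod_(i < n) CQ i (f i) (z i)) * (f == fstar)%:R)); last first.
  by move=> f _; rewrite -lam_m -lamZ -scaler_prod.
rewrite (bigD1 fstar) //= eqxx mulr1 [X in _ + X = _]big1 ?addr0 // => f /negbTE ->.
by rewrite mulr0.
Qed.
Hypothesis lam_sbasis : forall i k, CQ i (fstar i) (s (qb i k)) = CQ i (fstar i) (qb i k).
Hypothesis hspan : forall w, exists N (c : 'I_N -> F) (g : 'I_N -> {ffun 'I_n -> 'I_4}),
  w = \sum_(j < N) c j *: mono (g j).

Lemma s_sum (I : Type) (r : seq I) (G : I -> A) :
  s (\sum_(j <- r) G j) = \sum_(j <- r) s (G j).
Proof. exact: (big_morph s hsD gs0). Qed.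

Lemma s_mono f : s (mono f) = \prod_(i < n) s (qb i (f i)).
Proof. by rewrite /mono prodS ?index_enum_uniq. Qed.

Lemma lam_s w : lam (s w) = lam w.
Proof.
have [N [c [g ->]]] := hspan w.
rewrite s_sum !lam_sum; apply: eq_bigr => j _; rewrite hsZ !lamZ; congr (_ * _).
rewrite s_mono lam_prod; last by move=> i; apply: hsQ.
by rewrite /mono lam_prod //; apply: eq_bigr => i _; rewrite lam_sbasis.
Qed.

Definition phi w := lam (s w * w).

Lemma phiD x y : phi (x + y) = phi x + phi y.
Proof.
rewrite /phi hsD mulrDl !mulrDr !lamD.
have e : lam (s y * x) = lam (s x * y) by rewrite -lam_s hsm hss.
rewrite e; set p := lam (s x * x); set q := lam (s y * y); set r := lam (s x * y).
by ring: two0.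
Qed.

Lemma phi0 : phi 0 = 0.
Proof. by rewrite /phi mulr0 lam0. Qed.

Lemma phiZ k x : phi (k *: x) = k ^+ 2 * phi x.
Proof. by rewrite /phi hsZ -scalerAl -scalerAr scalerA lamZ expr2. Qed.

Lemma phi_sum (N : nat) (c : 'I_N -> F) (g : 'I_N -> A) :
  phi (\sum_(j < N) c j *: g j) = \sum_(j < N) c j ^+ 2 * phi (g j).
Proof.
rewrite (big_morph phi phiD phi0); apply: eq_bigr => j _; exact: phiZ.
Qed.

Lemma phi_mono f : phi (mono f) = \prod_(i < n) CQ i (fstar i) (s (qb i (f i)) * qb i (f i)).
Proof.
rewrite /phi s_mono /mono prodM ?index_enum_uniq //; last by move=> i; apply: hsQ.
by rewrite lam_prod // => i; apply: hQM => //; apply: hsQ.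
Qed.

Lemma phi_x x c a : s x = x -> x * x = c%:A -> phi (x * a) = c * phi a.
Proof.
move=> hx hc; rewrite /phi hsm hx -mulrA (mulrA x) hc mulr_algl -scalerAr.
by rewrite lamZ.
Qed.
End Glob.

Section Rset.
Variables (F : fieldType) (n : nat) (alpha : 'I_n -> F).
Hypothesis two0 : (2%:R : F) = 0.
Definition Rset c := exists w : {ffun {set 'I_n} -> F}, c = pfister alpha w w.

Lemma R_add c d : Rset c -> Rset d -> Rset (c + d).
Proof.
move=> [w ->] [w' ->]; exists (w + w'); rewrite /pfister -big_split /=.
by apply: eq_bigr => S _; rewrite !ffunE; ring: two0.
Qed.

Lemma R_sqmul k c : Rset c -> Rset (k ^+ 2 * c).
Proof.
move=> [w ->]; exists [ffun S => k * w S]; rewrite /pfister mulr_sumr.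
by apply: eq_bigr => S _; rewrite !ffunE; ring.
Qed.

Lemma R_sq k : Rset (k ^+ 2).
Proof.
exists [ffun S => if S == set0 then k else 0]; rewrite /pfister (bigD1 set0) //=.
rewrite [X in _ + X]big1 ?addr0; last first.
  by move=> S /negbTE hS; rewrite !ffunE hS !mulr0.
rewrite !ffunE eqxx big1 ?mul1r ?expr2 // => i; by rewrite in_set0.
Qed.

Definition tog (i : 'I_n) (S : {set 'I_n}) := if i \in S then S :\ i else i |: S.

Lemma togK i : involutive (tog i).
Proof.
move=> S; rewrite /tog; case hi: (i \in S).
  by rewrite setD11 setD1K.
by rewrite setU11 setU1K ?hi.
Qed.

Lemma R_alpha i c : Rset c -> Rset (alpha i * c).
Proof.
move=> [w ->].
exists [ffun S : {set 'I_n} => (if i \in S then 1 else alpha i) * w (tog i S)].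
rewrite /pfister mulr_sumr (reindex_inj (inv_inj (togK i))) /=.
apply: eq_bigr => S _; rewrite !ffunE /tog; case: ifP => hi.
  by rewrite (big_setD1 i hi) /=; ring.
by rewrite big_setU1 ?hi //=; ring.
Qed.

Lemma R_mulb (I : Type) (r : seq I) (idx : I -> 'I_n) (beta : I -> F) c :
  (forall j, exists s0 t0, beta j = s0 ^+ 2 + t0 ^+ 2 * alpha (idx j)) ->
  Rset c -> Rset (c * \prod_(j <- r) beta j).
Proof.
move=> hb; elim: r c => [|h t IH] c hc; first by rewrite big_nil mulr1.
rewrite big_cons mulrA; apply: IH.
have [s0 [t0 ->]] := hb h.
rewrite mulrDr; apply: R_add; first by rewrite mulrC; apply: R_sqmul.
rewrite (_ : c * (t0 ^+ 2 * alpha (idx h)) = t0 ^+ 2 * (alpha (idx h) * c)); last by ring.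
by apply: R_sqmul; apply: R_alpha.
Qed.
End Rset.

Theorem corollary4p9 (F : fieldType) (A : falgType F) (s : A -> A)
    (n : nat) (u v : 'I_n -> A) (alpha : 'I_n -> F) :
  (2 \in [pchar F])%N ->
  central_simple A ->
  involution_first_kind s ->
  orthogonal_inv s ->
  tot_decomp s u v ->
  (forall i, represents_disc s (u i) (v i) (alpha i)) ->
  forall x : A, SymPlus s x ->
  forall c : F, x * x = c%:A ->
  Qvals (pfister alpha) c.
Proof.
move=> hp _ [hsl [hsm hss]] hort [hqg [hsQ0 [hcomm hbas]]] hdisc x [hxs _] c hxc.
have two0 : (2%:R : F) = 0 := pcharf0 hp.
have hsD y z : s (y + z) = s y + s z by have := hsl 1 y z; rewrite !scale1r.
have s0 : s 0 = 0.
  have := hsl 1 0 0; rewrite !scale1r addr0 => /(congr1 (fun w => w - s 0)).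
  by rewrite subrr addrK => /esym.
have hsZ k y : s (k *: y) = k *: s y by have := hsl k y 0; rewrite !addr0 s0 addr0.
have PQ i : [/\ forall z, z \in qspan (u i) (v i) -> s z \in qspan (u i) (v i),
      forall z, z \in qspan (u i) (v i) -> CQ (u i) (v i) o1 (s z) = CQ (u i) (v i) o1 z,
      forall z, z \in qspan (u i) (v i) ->
        exists s0 t0, CQ (u i) (v i) o1 (s z * z) = s0 ^+ 2 + t0 ^+ 2 * alpha i
    & exists k, CQ (u i) (v i) o1 (s (qbasis (u i) (v i) k) * qbasis (u i) (v i) k) != 0].
  have [a [b [hb [hu [hv hvu]]]]] := hqg i; have [hsu hsv] := hsQ0 i.
  exact: (quat_iface two0 hb hu hv hvu hsl hsm hss hort hsu hsv (hdisc i)).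
have hQM i (y z : A) : y \in qspan (u i) (v i) -> z \in qspan (u i) (v i) ->
    y * z \in qspan (u i) (v i).
  have [a [b [_ [hu [hv hvu]]]]] := hqg i. exact: (qspanM hu hv hvu).
have hsQ i (z : A) : z \in qspan (u i) (v i) -> s z \in qspan (u i) (v i).
  by have [H _ _ _] := PQ i; apply: H.
set L := enum {ffun 'I_n -> 'I_4}.
pose fstar : {ffun 'I_n -> 'I_4} := [ffun=> o1].
have hXs : [seq \prod_(i < n) qbasis (u i) (v i) (f i) | f : {ffun 'I_n -> 'I_4}] =
    map (mono u v) L by [].
rewrite hXs in hbas.
pose XT := in_tuple (map (mono u v) L).
have hfree : free XT := basis_free hbas.
have sizeL : size (map (mono u v) L) = size L by rewrite size_map.
have memL f : f \in L by rewrite mem_enum.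
have idx_lt f : (index f L < size (map (mono u v) L))%N by rewrite sizeL index_mem.
pose i0 : 'I_(size (map (mono u v) L)) := Ordinal (idx_lt fstar).
pose lam := coord XT i0.
have XTnth (j : 'I_(size (map (mono u v) L))) : XT`_j = mono u v (nth fstar L j).
  by rewrite /= (nth_map fstar) // -sizeL.
have lam_m f : lam (mono u v f) = (f == fstar)%:R.
  have -> : mono u v f = XT`_(Ordinal (idx_lt f)) by rewrite XTnth /= nth_index.
  rewrite /lam coord_free //.
  have -> : (Ordinal (idx_lt f) == i0) = (f == fstar); last by [].
  apply/eqP/eqP => [h | hf].
    by move: (congr1 val h) => /= /(index_inj fstar (memL f) (memL fstar)).
  by apply/val_inj; rewrite /= hf.
have lamD (y z : A) : lam (y + z) = lam y + lam z by rewrite /lam linearD.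
have lamZ k (y : A) : lam (k *: y) = k * lam y by rewrite /lam linearZ.
have hqb i k : qbasis (u i) (v i) k \in qspan (u i) (v i) := qbasis_in (u i) (v i) k.
pose CQ' i k z := CQ (u i) (v i) k z.
have CQ_exp i z : z \in qspan (u i) (v i) ->
    z = \sum_(k < 4) CQ' i k z *: qbasis (u i) (v i) k.
  by move=> hz; rewrite {1}(qspan_exp hz).
have lam_sbasis i k : CQ' i (fstar i) (s (qbasis (u i) (v i) k)) =
    CQ' i (fstar i) (qbasis (u i) (v i) k).
  by rewrite /CQ' ffunE; have [_ H _ _] := PQ i; apply: H.
have hspan w : exists N (cc : 'I_N -> F) (g : 'I_N -> {ffun 'I_n -> 'I_4}),
    w = \sum_(j < N) cc j *: mono u v (g j).
  exists (size (map (mono u v) L)), (fun j => coord XT j w), (fun j => nth fstar L j).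
  rewrite {1}(@coord_basis _ _ fullv _ XT w hbas (memvf w)).
  by apply: eq_bigr => j _; rewrite XTnth.
have hsQ' := hsQ.
have Rphi_mono f : Rset alpha (phi s lam (mono u v f)).
  rewrite (phi_mono hsm hss hcomm hsQ hQM hqb CQ_exp lamD lamZ lam_m f).
  rewrite -[X in Rset _ X]mul1r; apply: (R_mulb two0 _ (idx := id)).
    move=> i; rewrite /CQ' ffunE /=; have [_ _ H _] := PQ i; apply: H.
    by apply: hqb.
  by have := R_sq alpha 1; rewrite expr1n.
have Rphi w : Rset alpha (phi s lam w).
  have [N [cc [g ->]]] := hspan w.
  rewrite (phi_sum two0 hsD hsZ hsm hss hcomm hsQ hqb CQ_exp lamD lamZ lam_m lam_sbasis hspan).
  apply: (big_ind (Rset alpha)).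
  - by have := R_sq alpha 0; rewrite expr2 mulr0.
  - by move=> y z; apply: R_add.
  - by move=> j _; apply: R_sqmul.
have PQiv i : exists k, CQ' i (fstar i) (s (qbasis (u i) (v i) k) * qbasis (u i) (v i) k) != 0.
  by rewrite /CQ' ffunE; have [_ _ _ H] := PQ i.
pose f0 : {ffun 'I_n -> 'I_4} := [ffun i => xchoose (PQiv i)].
pose a := mono u v f0.
have dE := phi_mono hsm hss hcomm hsQ hQM hqb CQ_exp lamD lamZ lam_m f0.
set d := phi s lam (mono u v f0) in dE.
have dnz : d != 0.
  rewrite dE prodf_seq_neq0; apply/allP => i _ /=.
  have -> : f0 i = xchoose (PQiv i) by rewrite /f0 ffunE.
  exact: (xchooseP (PQiv i)).
have hcd : phi s lam (x * a) = c * d := phi_x hsm lamZ a hxs hxc.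
have R1 : Rset alpha (c * d) by rewrite -hcd; apply: Rphi.
have R2 : Rset alpha (c * d * d).
  rewrite {2}dE; apply: (R_mulb two0 _ (idx := id)) R1.
  move=> i; rewrite /CQ' ffunE /=; have [_ _ H _] := PQ i; apply: H.
  by apply: hqb.
have R3 : Rset alpha c.
  have := R_sqmul d^-1 R2; rewrite (_ : d^-1 ^+ 2 * (c * d * d) = c) //.
  by field.
case: R3 => w hw.
case: (eqVneq c 0) => [-> | cn]; [by left | right].
exists w; split; last by rewrite hw.
apply: contraNneq cn => w0; rewrite hw w0 /pfister big1 // => S _.
by rewrite !ffunE !mulr0.
Qed.
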